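(* Let $c>2/\log e$ and let $n$ be any positive integer. If $d\in[n]$ and $m\ge c\,n\,2^{2d}$, then $\mathcal{F}\sim\mathcal{F}(m,n,d)^{\otimes 2}$ is unsatisfiable with high probability.
   Context: $\log$ denotes base-2 logarithm. $\mathcal{F}(m,n,d)$ is the distribution of random $d$-CNFs on $n$ variables obtained by sampling $m$ clauses independently and uniformly with replacement from the $\binom{n}{d}2^d$ clauses on $d$ distinct variables. For disjoint variable sets $X=\{x_1,\dots,x_n\}$ and $Y=\{y_1,\dots,y_n\}$, $\mathcal{F}(m,n,d)^{\otimes 2}$ is the distribution of $2d$-CNFs obtained by sampling $C^1_1\wedge\dots\wedge C^1_m\sim\mathcal{F}(m,n,d)$ on $X$ and independently $C^2_1\wedge\dots\wedge C^2_m\sim\mathcal{F}(m,n,d)$ on $Y$, and outputting $(C^1_1\vee C^2_1)\wedge\dots\wedge(C^1_m\vee C^2_m)$. ''With high probability'' means with probability tending to $1$ as $n\to\infty$. *)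

(* Defs.v *)
From Stdlib Require Import Reals.
From Coquelicot Require Import Coquelicot.
From mathcomp Require Import all_boot.

Local Open Scope R_scope.
Set Implicit Arguments.
Unset Strict Implicit.
Unset Printing Implicit Defensive.

Definition log2 (x : R) : R := ln x / ln 2.

(* A clause on d distinct variables among x_0..x_{n-1}:
   f i = None  : variable i does not occur;
   f i = Some true  : literal x_i occurs;
   f i = Some false : literal ~x_i occurs.  This type is in bijection with the
   binom(n,d) 2^d clauses on d distinct variables. *)
Definition clause (n d : nat) :=
  {f : {ffun 'I_n -> option bool} | #|[pred i | f i != None]| == d}.

Definition assignment (n : nat) := {ffun 'I_n -> bool}.

Definition clause_sat (n d : nat) (C : clause n d) (a : assignment n) : bool :=
  [exists i : 'I_n, val C i == Some (a i)].

(* An outcome of F(m,n,d)^{(x)2}: the m clauses C^1_j on X and the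
   m clauses C^2_j on Y (each an independent uniform sample). *)
Definition formula2 (m n d : nat) :=
  ({ffun 'I_m -> clause n d} * {ffun 'I_m -> clause n d})%type.

(* Satisfiability of (C^1_1 \/ C^2_1) /\ ... /\ (C^1_m \/ C^2_m)
   over variables X (assignment a) and Y (assignment b). *)
Definition sat2 (m n d : nat) (F : formula2 m n d) : bool :=
  [exists a : assignment n, exists b : assignment n,
     [forall j : 'I_m, clause_sat (F.1 j) a || clause_sat (F.2 j) b]].

(* Probability (uniform measure on all outcomes = independent uniform
   sampling with replacement) that F ~ F(m,n,d)^{(x)2} is satisfiable. *)
Definition prob_sat2 (m n d : nat) : R :=
  INR #|[pred F : formula2 m n d | sat2 F]| / INR #|{: formula2 m n d}|.

(* Main.v *)
Require Import Defs.
From Stdlib Require Import Reals Lra.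
From Coquelicot Require Import Coquelicot.
From mathcomp Require Import all_boot.
Local Open Scope R_scope.

Set Implicit Arguments. Unset Strict Implicit.
Local Open Scope nat_scope.

Lemma card_nat (T : finType) (A : pred T) : #|A| = \sum_(x : T) nat_of_bool (A x).
Proof.
rewrite -sum1_card big_mkcond /=; apply: eq_bigr => x _; rewrite unfold_in; by case: (A x).
Qed.

Lemma prod_bool (I : finType) (b : I -> bool) :
  \prod_(i : I) nat_of_bool (b i) = nat_of_bool [forall i, b i].
Proof.
case: forallP => [H|H].
  by rewrite big1 // => i _; rewrite H.
have [i Hi] : exists i, ~~ b i.
  apply/existsP; apply: contraR (introN forallP H) => /existsPn H2.
  by apply/forallP => i; move: (H2 i); rewrite negbK.
by rewrite (bigD1 i) //= (negbTE Hi) mul0n.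
Qed.

Lemma count_forall (I T : finType) (Q : T -> T -> bool) :
  #|[pred F : {ffun I -> T} * {ffun I -> T} | [forall j, Q (F.1 j) (F.2 j)]]|
  = #|[pred p : T * T | Q p.1 p.2]| ^ #|I|.
Proof.
rewrite card_nat card_nat.
under eq_bigr => F _ do rewrite /= -prod_bool.
rewrite -(pair_big predT predT (fun (f g : {ffun I -> T}) => \prod_j nat_of_bool (Q (f j) (g j)))) /=.
under eq_bigr => f _ do rewrite -(bigA_distr_bigA (fun j y => nat_of_bool (Q (f j) y))).
rewrite -(bigA_distr_bigA (fun j x => \sum_y nat_of_bool (Q x y))) /=.
rewrite (pair_big predT predT (fun x y => nat_of_bool (Q x y))) /=.
by rewrite -(prod_nat_const I).
Qed.

Lemma card_pair_and (T : finType) (A B : pred T) :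
  #|[pred p : T * T | A p.1 && B p.2]| = #|A| * #|B|.
Proof.
rewrite card_nat !card_nat big_distrlr /=.
rewrite -(pair_big predT predT (fun x y => nat_of_bool (A x && B y))) /=.
apply: eq_bigr => x _; apply: eq_bigr => y _; by case: (A x); case: (B y).
Qed.

Lemma union_bound (T U : finType) (S : pred T) (Pr : U -> U -> pred T) :
  (forall F, S F -> exists a b, Pr a b F) ->
  #|S| <= \sum_(a : U) \sum_(b : U) #|Pr a b|.
Proof.
move=> H; rewrite card_nat.
have -> : \sum_(a : U) \sum_(b : U) #|Pr a b| =
   \sum_(F : T) \sum_(a : U) \sum_(b : U) nat_of_bool (Pr a b F).
  rewrite [RHS]exchange_big /=; apply: eq_bigr => a _.
  rewrite [RHS]exchange_big /=; apply: eq_bigr => b _; exact: card_nat.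
apply: leq_sum => F _.
case SF: (S F) => //=.
have [a [b Hab]] := H F SF.
rewrite (bigD1 a) //= (bigD1 b) //= Hab /=.
by rewrite -addnA leq_addr.
Qed.

Section Flip.
Variables (n d : nat) (a : assignment n).

Definition flipf (f : {ffun 'I_n -> option bool}) : {ffun 'I_n -> option bool} :=
  [ffun i => if f i is Some _ then Some (~~ a i) else None].

Lemma flipf_supp (f : {ffun 'I_n -> option bool}) :
  #|[pred i | flipf f i != None]| = #|[pred i | f i != None]|.
Proof. apply: eq_card => i; rewrite !inE /flipf ffunE; by case: (f i). Qed.

Definition flip (C : clause n d) : clause n d :=
  exist _ (flipf (val C)) (eq_ind_r (fun k => k == d) (valP C) (flipf_supp (val C))).

Definition fals : pred (clause n d) := fun C => ~~ clause_sat C a.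

Lemma flip_fals C : fals (flip C).
Proof.
rewrite /fals /clause_sat; apply/existsPn => i /=.
rewrite /flipf ffunE; case: (val C i) => //= _.
by case: (a i).
Qed.

Definition gC (C : clause n d) : {ffun 'I_n -> bool} :=
  [ffun i => val C i == Some true].

Lemma fiber_le (D : clause n d) : #|[pred C | flip C == D]| <= 2 ^ d.
Proof.
set S := [pred i | val D i != None].
have -> : 2 ^ d = #|pffun_on false S predT|.
  by rewrite card_pffun_on card_bool; move: (valP D) => /eqP ->.
rewrite -(card_in_imset (f := gC)).
  apply: subset_leq_card; apply/subsetP => g /imsetP [C HC ->].
  apply/pffun_onP; split; last by move=> ? ?.
  apply/subsetP => i; rewrite /gC unfold_in /= ffunE.
  move: HC; rewrite inE => /eqP HC. subst D. rewrite /S unfold_in /= /flipf ffunE.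
  by case: (val C i).
move=> C1 C2; rewrite !inE => /eqP H1 /eqP H2 Hg.
apply: val_inj; apply/ffunP => i.
have E1 : flipf (val C1) i = flipf (val C2) i by rewrite -[flipf (val C1)]/(val (flip C1)) H1 -H2.
have E2 : gC C1 i = gC C2 i by rewrite Hg.
move: E1 E2; rewrite /flipf /gC !ffunE.
by case: (val C1 i) => [[]|]; case: (val C2 i) => [[]|].
Qed.

Lemma K_le : #|{: clause n d}| <= 2 ^ d * #|fals|.
Proof.
rewrite -sum1_card (partition_big flip fals) /=; last by move=> C _; exact: flip_fals.
rewrite mulnC -sum_nat_const; apply: leq_sum => D _.
rewrite sum1dep_card. 
by apply: leq_trans (fiber_le D); apply: subset_leq_card; apply/subsetP => C; rewrite !inE.
Qed.
End Flip.

Lemma leq_pow a b k : a <= b -> a ^ k <= b ^ k.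
Proof. move=> H; elim: k => // k IH; rewrite !expnS leq_mul //. Qed.

Lemma good_pair_eq n d (a b : assignment n) :
  #|[pred p : clause n d * clause n d | clause_sat p.1 a || clause_sat p.2 b]|
  + #|@fals n d a| * #|@fals n d b| = #|{: clause n d}| ^ 2.
Proof.
rewrite -card_pair_and expnS expn1 -card_prod -(cardC [pred p : clause n d * clause n d | clause_sat p.1 a || clause_sat p.2 b]).
congr (_ + _); apply: eq_card => p.
by rewrite !inE /fals negb_or.
Qed.

Lemma good_le n d (a b : assignment n) :
  #|[pred p : clause n d * clause n d | clause_sat p.1 a || clause_sat p.2 b]| * 4 ^ d
  <= #|{: clause n d}| ^ 2 * (4 ^ d - 1).
Proof.
have E := @good_pair_eq n d a b.
have Ka := @K_le n d a. have Kb := @K_le n d b.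
set G := #|[pred p : clause n d * clause n d | _]| in E *.
set K := #|{: clause n d}| in E Ka Kb *.
set Fa := #|@fals n d a| in E Ka. set Fb := #|@fals n d b| in E Kb.
have H4 : K ^ 2 <= 4 ^ d * (Fa * Fb).
  have -> : 4 ^ d = 2 ^ d * 2 ^ d by rewrite -expnMn.
  rewrite expnS expn1 mulnACA; exact: leq_mul.
have P4 : 0 < 4 ^ d by rewrite expn_gt0.
rewrite -E in H4.
rewrite mulnBr muln1 -E mulnDl.
rewrite (mulnC (Fa * Fb)) -addnBA ?leq_addl //.
exact: leq_addr.
Qed.

Lemma card_f2 m n d : #|{: formula2 m n d}| = #|{: clause n d}| ^ m * #|{: clause n d}| ^ m.
Proof. by rewrite card_prod !card_ffun card_ord. Qed.

Lemma main_nat m n d :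
  #|[pred F : formula2 m n d | sat2 F]| * (4 ^ d) ^ m
  <= 4 ^ n * #|{: formula2 m n d}| * (4 ^ d - 1) ^ m.
Proof.
have U := @union_bound (formula2 m n d) (assignment n) [pred F | sat2 F]
  (fun a b => [pred F : formula2 m n d | [forall j, clause_sat (F.1 j) a || clause_sat (F.2 j) b]]).
have U' : #|[pred F : formula2 m n d | sat2 F]| <=
   \sum_(a : assignment n) \sum_(b : assignment n)
     #|[pred p : clause n d * clause n d | clause_sat p.1 a || clause_sat p.2 b]| ^ m.
  apply: leq_trans (U _) _.
    move=> F; rewrite inE /sat2 => /existsP [a /existsP [b H]]; exists a, b; exact: H.
  apply: leq_sum => a _; apply: leq_sum => b _.
  by rewrite (@count_forall 'I_m (clause n d) (fun x y => clause_sat x a || clause_sat y b)) card_ord.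
apply: leq_trans (leq_mul U' (leqnn _)) _.
rewrite big_distrl /=.
apply: leq_trans (_ : \sum_(a : assignment n) \sum_(b : assignment n)
   (#|{: clause n d}| ^ 2 * (4 ^ d - 1)) ^ m <= _).
  apply: leq_sum => a _; rewrite big_distrl /=; apply: leq_sum => b _.
  rewrite -expnMn; apply: leq_pow; exact: good_le.
rewrite !sum_nat_const !card_ffun card_bool card_ord card_f2.
have -> : 4 ^ n = 2 ^ n * 2 ^ n by rewrite -expnMn.
by rewrite expnMn -(expnMn #|{: clause n d}|) mulnn !mulnA.
Qed.

Local Open Scope R_scope.

Lemma INR_muln a b : INR (a * b)%N = INR a * INR b.
Proof. exact: mult_INR. Qed.

Lemma INR_expn a k : INR (a ^ k)%N = INR a ^ k.
Proof.
elim: k => [|k IH]; first by rewrite expn0.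
by rewrite expnS INR_muln IH.
Qed.

Lemma INR_leq a b : (a <= b)%N -> INR a <= INR b.
Proof. by move/leP; apply: le_INR. Qed.

Lemma INR_subn a b : (b <= a)%N -> INR (a - b)%N = INR a - INR b.
Proof. by move/leP => H; apply: minus_INR. Qed.

Lemma exp_pow y k : exp y ^ k = exp (INR k * y).
Proof.
elim: k => [|k IH]; first by rewrite /= Rmult_0_l exp_0.
by rewrite S_INR [LHS]/= IH -exp_plus; f_equal; ring.
Qed.

Lemma exp_le a b : a <= b -> exp a <= exp b.
Proof.
move=> H; case: (Rle_lt_or_eq_dec _ _ H) => [H1|->]; last exact: Rle_refl.
by left; apply: exp_increasing.
Qed.

Lemma INR4 : INR 4 = 4.
Proof. simpl; ring. Qed.

Lemma key_bound (c : R) (m n d : nat) (hc : 0 < c)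
  (hm : INR m >= c * INR n * 2 ^ (2 * d)) :
  prob_sat2 m n d <= (4 * exp (- c)) ^ n.
Proof.
rewrite /prob_sat2.
set cnt := #|[pred F : formula2 m n d | sat2 F]|.
set T := #|{: formula2 m n d}|.
have H := main_nat m n d.
rewrite -/cnt -/T in H.
have HQ : INR (4 ^ d)%N = 4 ^ d by rewrite INR_expn INR4.
have Q1 : 1 <= 4 ^ d by apply: pow_R1_Rle; lra.
have Hr : 0 <= (4 * exp (- c)) ^ n.
  apply: pow_le; apply: Rmult_le_pos; [lra | left; apply: exp_pos].
have HR := INR_leq H.
rewrite !INR_muln !INR_expn INR_subn ?expn_gt0 // !INR_expn !INR4 in HR. change (INR 1) with 1 in HR.
case: (Req_dec (INR T) 0) => HT.
  have : (cnt <= T)%N by apply: max_card.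
  move/INR_leq; rewrite HT => Hc.
  have -> : INR cnt = 0 by have := pos_INR cnt; lra.
  by rewrite /Rdiv Rmult_0_l.
have HT' : 0 < INR T by have := pos_INR T; lra.
set x := / 4 ^ d.
have Hx : 0 < x by apply: Rinv_0_lt_compat; lra.
have Hx1 : x <= 1 by rewrite /x -Rinv_1; apply: Rinv_le_contravar; lra.
have S1 : INR cnt / INR T <= 4 ^ n * (1 - x) ^ m.
  apply: (Rmult_le_reg_r (INR T * (4 ^ d) ^ m)).
    apply: Rmult_lt_0_compat => //; apply: pow_lt; lra.
  have -> : INR cnt / INR T * (INR T * (4 ^ d) ^ m) = INR cnt * (4 ^ d) ^ m by field.
  have -> : 4 ^ n * (1 - x) ^ m * (INR T * (4 ^ d) ^ m) = 4 ^ n * INR T * ((1 - x) * 4 ^ d) ^ m.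
    rewrite Rpow_mult_distr; ring.
  have -> : (1 - x) * 4 ^ d = 4 ^ d - 1 by rewrite /x; field; lra.
  exact: HR.
have S2 : (1 - x) ^ m <= exp (- x) ^ m.
  apply: pow_incr; split; first lra.
  have := exp_ineq1_le (- x); lra.
have E2 : 2 ^ (2 * d) = 4 ^ d by rewrite pow_mult; f_equal; ring.
rewrite E2 in hm.
have S3 : exp (- x) ^ m <= exp (- c) ^ n.
  rewrite !exp_pow; apply: exp_le.
  have : INR m * x >= c * INR n.
    apply: Rle_ge.
    have -> : c * INR n = c * INR n * 4 ^ d * x by rewrite /x; field; lra.
    apply: Rmult_le_compat_r; lra.
  lra.
rewrite Rpow_mult_distr.
apply: Rle_trans S1 _.
apply: Rmult_le_compat_l; first by apply: pow_le; lra.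
lra.
Qed.

Lemma prob_ge0 m n d : 0 <= prob_sat2 m n d.
Proof.
rewrite /prob_sat2 /Rdiv; apply: Rmult_le_pos; first exact: pos_INR.
set t := INR _.
case: (Req_dec t 0) => Ht; first by rewrite Ht Rinv_0; lra.
by left; apply: Rinv_0_lt_compat; have := pos_INR #|{: formula2 m n d}|; rewrite -/t; lra.
Qed.


Unset Implicit Arguments.
Set Strict Implicit.

Theorem mainTheorem4 (c : R) (hc : c > 2 / log2 (exp 1))
  (d m : nat -> nat)
  (hd : forall n : nat, (0 < n)%N -> (1 <= d n <= n)%N)
  (hm : forall n : nat, (0 < n)%N ->
          INR (m n) >= c * INR n * 2 ^ (2 * d n))
  : is_lim_seq (fun n => prob_sat2 (m n) n (d n)) (Rbar.Finite 0).
Proof.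
have Hl2 : 0 < ln 2 by rewrite -ln_1; apply: ln_increasing; lra.
have Hc : c > 2 * ln 2.
  move: hc; rewrite /log2 ln_exp.
  have -> : 2 / (1 / ln 2) = 2 * ln 2 by field; lra.
  done.
have Hc0 : 0 < c by lra.
set r := 4 * exp (- c).
have Hr0 : 0 <= r by rewrite /r; have := exp_pos (- c); lra.
have Hr1 : r < 1.
  have H4 : exp (- c) < exp (- ln 4) by apply: exp_increasing;
    rewrite (_ : 4 = 2 * 2); [rewrite ln_mult; lra | ring].
  rewrite (exp_Ropp (ln 4)) exp_ln in H4; last lra.
  rewrite /r; lra.
apply: (is_lim_seq_le_le_loc (fun _ => 0) _ (fun n => r ^ n)).
- exists 1%N => n Hn; split; first exact: prob_ge0.
  apply: key_bound => //; apply: hm; apply/leP; exact: Hn.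
- exact: is_lim_seq_const.
- apply: is_lim_seq_geom; rewrite Rabs_right; lra.
Qed.
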